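(* The Giry monad $P$ and the monad $M$ of subprobability measures on $\mathbf{Meas}$ are observational.
   Context: $\mathbf{Meas}$ is the category of measurable spaces with product $\sigma$-algebras as products. $PX$ is the set of probability measures on $X$ with the coarsest $\sigma$-algebra making $p\mapsto p(A)$ measurable for all measurable $A$; $\eta_X(x)=\delta_x$; $\mu_X(\rho)(A)=\int_{PX}p(A)\,\rho(dp)$; $Pf$ is pushforward; the commutative monoidal structure $\nabla:PX\times PY\to P(X\times Y)$ is the product measure. $M$ is analogous with subprobability measures. For a commutative monad $T$ on a cartesian monoidal category: $\mathsf{Kl}(T)$ has morphisms $f:A\rightsquigarrow B$ corresponding to $f^\sharp:A\to TB$, composition $(g\circledcirc f)^\sharp=\mu\circ T(g^\sharp)\circ f^\sharp$, tensor $\otimes$ equal to $\times$ on objects with $(f\otimes g)^\sharp=\nabla\circ(f^\sharp\times g^\sharp)$; $\mathsf{force}_A:TA\rightsquigarrow A$ has $\mathsf{force}_A^\sharp=1_{TA}$; $\mathsf{copy}_n:TX\rightsquigarrow(TX)^{\otimes n}$ has $\mathsf{copy}_n^\sharp=\eta\circ\Delta_n$ ($\Delta_n$ the $n$-fold diagonal); $\mathsf{samp}_n=\mathsf{force}^{\otimes n}\circledcirc\mathsf{copy}_n:TX\rightsquigarrow X^{\otimes n}$. $T$ is observational if for every $X$ the family $(\mathsf{samp}_n)_{n\in\mathbb{N}}$ is jointly monic in $\mathsf{Kl}(T)$. *)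

(* Defs.v *)
From HB Require Import structures.
From mathcomp Require Import all_boot all_order all_algebra.
From mathcomp Require Import all_classical all_reals all_analysis.
From mathcomp Require Import giry.
Set Implicit Arguments. Unset Strict Implicit. Unset Printing Implicit Defensive.
Import Order.TTheory GRing.Theory Num.Theory.
Local Open Scope classical_set_scope.
Local Open Scope ereal_scope.

(* Conventions.
   - Measurable spaces: [measurableType d]; X^{(x) n} is [n.-tuple X] with the
     library's product sigma-algebra (generated by the coordinates).
   - P X  = [pprobability X R]: probability measures with the sigma-algebra
     generated by the sets {p | p U < r} (U measurable, r in [0,1]), i.e. the
     coarsest one making every p |-> p U measurable.
   - M X  = [giry X R]: subprobability measures with the sigma-algebra generated
     by the evaluation maps p |-> p U (U measurable).
   - Equality of (sub)probability measures, hence of Kleisli morphisms, is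
     equality on all measurable sets. *)

(* n-fold product measure mu^{(x) n} = nabla_n (mu,...,mu) on n.-tuple X,
   defined by iterated sections:
     mu^{(x)0}   = Dirac at the empty tuple (unit of the monoidal structure),
     mu^{(x)n+1} B = \int mu(dx) mu^{(x)n} {t | x :: t \in B}. *)
Section iprod.
Context {d : measure_display} {X : measurableType d} {R : realType}.
Fixpoint iprod (mu : measure X R) (n : nat) : set (n.-tuple X) -> \bar R :=
  match n return set (n.-tuple X) -> \bar R with
  | 0 => fun B => (\1_B (@nil_tuple X) : R)%:E
  | n'.+1 => fun B => \int[mu]_x @iprod mu n' [set t | B (cons_tuple x t)]
  end.
End iprod.
Arguments iprod {d X R} mu n B.

(* samp_n^# : T X -> T (X^{(x) n}) is  p |-> nabla_n (p,...,p) = p^{(x) n}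
   (indeed samp_n^# = mu o T(nabla_n o (1,...,1)) o eta o Delta_n
                    = nabla_n o Delta_n).
   For a Kleisli morphism f : A ~> T X (f^# : A -> T(T X) measurable),
     (samp_n (o) f)^# a = mu (T(samp_n^#) (f^# a)),
   whose value on a measurable B is  \int_{T X} p^{(x) n}(B) (f^# a)(dp). *)

Definition samp_after_P {R : realType} {dX dA} {X : measurableType dX}
  {A : measurableType dA} (f : A -> pprobability (pprobability X R) R)
  (n : nat) (a : A) (B : set (n.-tuple X)) : \bar R :=
  \int[f a]_p iprod (p : probability X R) n B.

Definition samp_after_M {R : realType} {dX dA} {X : measurableType dX}
  {A : measurableType dA} (f : A -> giry (giry X R) R)
  (n : nat) (a : A) (B : set (n.-tuple X)) : \bar R :=
  \int[f a]_p iprod (p : subprobability X R) n B.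
Arguments samp_after_P {R dX dA X A} f n a B.
Arguments samp_after_M {R dX dA X A} f n a B.

(* Main.v *)
Require Import Defs.
From HB Require Import structures.
From mathcomp Require Import all_boot all_order all_algebra.
From mathcomp Require Import all_classical all_reals all_analysis.
From mathcomp Require Import giry.
From mathcomp Require Import measurable_realfun.
From mathcomp Require Import ring lra.
Set Implicit Arguments. Unset Strict Implicit. Unset Printing Implicit Defensive.
Import Order.TTheory GRing.Theory Num.Theory.
Import numFieldNormedType.Exports.
Local Open Scope classical_set_scope.
Local Open Scope ring_scope.

Section Bern.
Context {R : realType}.

Fixpoint bern (m k : nat) (t : R) : R :=
  match m with
  | 0 => (k == 0)%:R
  | m'.+1 => (1 - t) * bern m' k t + (if k is k'.+1 then t * bern m' k' t else 0)
  end.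

Lemma bern_ge0 m k t : 0 <= t <= 1 -> 0 <= bern m k t.
Proof.
move=> /andP[t0 t1]; elim: m k => [|m IH] k /=; first by case: (k == 0).
apply: addr_ge0; first by apply: mulr_ge0 => //; rewrite subr_ge0.
by case: k => [|k] //; apply: mulr_ge0.
Qed.

Lemma bern_gt m k t : (m < k)%N -> bern m k t = 0.
Proof.
elim: m k => [|m IH] k /= mk; first by case: k mk.
rewrite IH ?(ltn_trans _ mk) // mulr0 add0r.
by case: k mk => [|k] // mk; rewrite IH ?mulr0.
Qed.

Lemma sum_step m t (g : nat -> R) :
  \sum_(k < m.+2) bern m.+1 k t * g k =
  (1 - t) * \sum_(k < m.+1) bern m k t * g k + t * \sum_(k < m.+1) bern m k t * g k.+1.
Proof.
rewrite /=.
under eq_bigr do rewrite mulrDl.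
rewrite big_split /=; congr (_ + _).
  rewrite big_ord_recr /= bern_gt // mulr0 mul0r addr0 mulr_sumr.
  by apply: eq_bigr => i _; rewrite mulrA.
rewrite big_ord_recl /= mul0r add0r mulr_sumr.
by apply: eq_bigr => i _; rewrite mulrA.
Qed.

Lemma bern_S0 m t : \sum_(k < m.+1) bern m k t = 1.
Proof.
elim: m => [|m IH]; first by rewrite big_ord1.
transitivity (\sum_(k < m.+2) bern m.+1 k t * 1).
  by apply: eq_bigr => i _; rewrite mulr1.
rewrite (sum_step m t (fun _ => 1)).
rewrite (eq_bigr (fun k : 'I_m.+1 => bern m k t)); last by move=> i _; rewrite mulr1.
by rewrite IH; ring.
Qed.

Lemma bern_S1 m t : \sum_(k < m.+1) bern m k t * k%:R = m%:R * t.
Proof.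
elim: m => [|m IH]; first by rewrite big_ord1 /=; ring.
rewrite (sum_step m t (fun k => k%:R)) IH.
under eq_bigr do rewrite -natr1 mulrDr mulr1.
by rewrite big_split /= IH bern_S0 -natr1; ring.
Qed.

Lemma bern_S2 m t : \sum_(k < m.+1) bern m k t * k%:R ^+ 2 =
  m%:R * t + m%:R * (m%:R - 1) * t ^+ 2.
Proof.
elim: m => [|m IH]; first by rewrite big_ord1 /=; ring.
rewrite (sum_step m t (fun k => k%:R ^+ 2)) IH.
rewrite (eq_bigr (fun k : 'I_m.+1 => bern m k t * k%:R ^+ 2 + 2 * (bern m k t * k%:R) + bern m k t)); last first.
  by move=> k _; rewrite -natr1 /=; ring.
rewrite !big_split /= -mulr_sumr IH bern_S1 bern_S0 -natr1; ring.
Qed.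

Lemma bern_var m t : \sum_(k < m.+1) bern m k t * (k%:R - m%:R * t) ^+ 2 =
  m%:R * t * (1 - t).
Proof.
rewrite (eq_bigr (fun k : 'I_m.+1 => bern m k t * k%:R ^+ 2 - 2 * m%:R * t * (bern m k t * k%:R) + (m%:R * t) ^+ 2 * bern m k t)); last first.
  by move=> k _; ring.
rewrite big_split /= sumrB -!mulr_sumr bern_S2 bern_S1 bern_S0; ring.
Qed.


Lemma cheb m t D (P : pred 'I_m.+1) : 0 <= t <= 1 -> 0 < D ->
  (forall k : 'I_m.+1, P k -> D ^+ 2 <= (k%:R - m%:R * t) ^+ 2) ->
  \sum_(k < m.+1 | P k) bern m k t <= m%:R * t * (1 - t) / D ^+ 2.
Proof.
move=> t01 D0 HP.
have D20 : 0 < D ^+ 2 by rewrite exprn_gt0.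
apply: (@le_trans _ _ (\sum_(k < m.+1 | P k) (bern m k t * (k%:R - m%:R * t) ^+ 2 / D ^+ 2))).
  apply: ler_sum => k Pk.
  rewrite -[X in X <= _]mulr1 -mulrA ler_wpM2l ?bern_ge0 //.
  by rewrite ler_pdivlMr // mul1r; exact: HP.
rewrite -bern_var mulr_suml.
rewrite [X in _ <= X](bigID P) /= lerDl.
apply: sumr_ge0 => k _; apply: divr_ge0; last exact: ltW.
by apply: mulr_ge0; [exact: bern_ge0|exact: sqr_ge0].
Qed.

Arguments bern : simpl never.

Definition qb (n : nat) (r t : R) : R :=
  \sum_(k < (n.+1 ^ 4).+1 | k%:R <= (n.+1 ^ 4)%:R * r - (n.+1 ^ 3)%:R)
    bern (n.+1 ^ 4) k t.

Lemma qb_ge0 n r t : 0 <= t <= 1 -> 0 <= qb n r t.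
Proof. by move=> t01; apply: sumr_ge0 => k _; exact: bern_ge0 _ _ t01. Qed.

Lemma qb_le1 n r t : 0 <= t <= 1 -> qb n r t <= 1.
Proof.
move=> t01; rewrite /qb -(bern_S0 (n.+1 ^ 4) t) big_mkcond; apply: ler_sum => k _.
by case: ifP => _ //; exact: bern_ge0 _ _ t01.
Qed.


Lemma qb_cvg r t : 0 <= t <= 1 ->
  (fun n => qb n r t) @ \oo --> (if t < r then 1 else 0 : R).
Proof.
move=> t01; have /andP[t0 t1] := t01.
have t1t : t * (1 - t) <= 1 by nra.
have t1t0 : 0 <= t * (1 - t) by nra.
apply/cvgrPdist_le => e e0.
case: ifPn => tr.
- pose eps := (r - t) / 2.
  have eps0 : 0 < eps by rewrite /eps; lra.
  near=> n.
  have h1 : 1 / eps < n%:R by near: n; exact: nbhs_infty_gtr.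
  have h2 : 1 / (e * eps ^+ 2) < n%:R by near: n; exact: nbhs_infty_gtr.
  have ee0 : 0 < e * eps ^+ 2 by rewrite mulr_gt0 // exprn_gt0.
  rewrite ltr_pdivrMr // in h1; rewrite ltr_pdivrMr // in h2.
  pose P := fun k : 'I_(n.+1 ^ 4).+1 => k%:R <= (n.+1 ^ 4)%:R * r - (n.+1 ^ 3)%:R.
  have -> : 1 - qb n r t = \sum_(k < (n.+1 ^ 4).+1 | ~~ P k) bern (n.+1 ^ 4) k t.
    by rewrite -{1}(bern_S0 (n.+1 ^ 4) t) (bigID P) /= addrC addrK.
  rewrite ger0_norm; last by apply: sumr_ge0 => k _; exact: bern_ge0.
  set N : R := n.+1%:R.
  have Nn : n%:R <= N by rewrite /N ler_nat.
  have N1 : 1 <= N by rewrite /N ler1n.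
  have M4 : (n.+1 ^ 4)%:R = N ^+ 4 by rewrite natrX.
  have M3 : (n.+1 ^ 3)%:R = N ^+ 3 by rewrite natrX.
  have Neps : 1 <= N * eps by nra.
  have N3 : N ^+ 3 <= N ^+ 4 * eps.
    have -> : N ^+ 4 * eps = N ^+ 3 * (N * eps) by ring.
    by rewrite -{1}[N ^+ 3]mulr1 ler_wpM2l // exprn_ge0 // (le_trans _ N1).
  apply: le_trans (cheb (D := N ^+ 4 * eps) t01 _ _) _.
  + by rewrite mulr_gt0 // exprn_gt0 // (lt_le_trans _ N1).
  + move=> k; rewrite /P -ltNge M4 M3 => hk.
    have : N ^+ 4 * eps <= k%:R - N ^+ 4 * t by rewrite /eps in N3 *; lra.
    have : 0 <= N ^+ 4 * eps by rewrite mulr_ge0 ?exprn_ge0 ?ltW // (le_trans _ N1).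
    move=> h0 h; rewrite -[k%:R]/(nat_of_ord k)%:R; nra.
  + rewrite M4 ler_pdivrMr; last by rewrite exprn_gt0 // mulr_gt0 // exprn_gt0 // (lt_le_trans _ N1).
    have N40 : 1 <= N ^+ 4 by rewrite exprn_ege1.
    have : 1 <= e * eps ^+ 2 * N ^+ 4.
      have : N <= N ^+ 4.
        have -> : N ^+ 4 = N * N ^+ 3 by ring.
        by rewrite -{1}[N]mulr1 ler_wpM2l ?exprn_ege1 // (le_trans _ N1).
      nra.
    move=> h; rewrite -mulrA.
    have : N ^+ 4 * (t * (1 - t)) <= N ^+ 4 by nra.
    nra.
- have rt : r <= t by rewrite leNgt.
  near=> n.
  have h1 : 1 / e < n%:R by near: n; exact: nbhs_infty_gtr.
  rewrite ltr_pdivrMr // in h1.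
  rewrite sub0r normrN ger0_norm; last exact: qb_ge0.
  set N : R := n.+1%:R.
  have Nn : n%:R <= N by rewrite /N ler_nat.
  have N1 : 1 <= N by rewrite /N ler1n.
  have M4 : (n.+1 ^ 4)%:R = N ^+ 4 by rewrite natrX.
  have M3 : (n.+1 ^ 3)%:R = N ^+ 3 by rewrite natrX.
  have N30 : 0 < N ^+ 3 by rewrite exprn_gt0 // (lt_le_trans _ N1).
  apply: le_trans (cheb (D := N ^+ 3) t01 N30 _) _.
  + move=> k; rewrite M4 M3 => hk.
    have : N ^+ 3 <= N ^+ 4 * t - k%:R.
      have : N ^+ 4 * r <= N ^+ 4 * t by rewrite ler_wpM2l // exprn_ge0 // (le_trans _ N1).
      lra.
    move=> h; nra.
  + rewrite M4 ler_pdivrMr; last by rewrite exprn_gt0.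
    have : 1 <= e * N ^+ 2 by nra.
    move=> h.
    rewrite (_ : N ^+ 3 ^+ 2 = N ^+ 4 * N ^+ 2); last by rewrite -!exprM -exprD.
    have N40 : 0 <= N ^+ 4 by rewrite exprn_ge0 // (le_trans _ N1).
    have : N ^+ 4 * (t * (1 - t)) <= N ^+ 4 by nra.
    rewrite -mulrA; nra.
Unshelve. all: by end_near.
Qed.

End Bern.

Lemma int_bd d (T : measurableType d) (R : realType) (mu : {measure set T -> \bar R})
  (h : T -> R) : (mu setT < +oo)%E -> measurable_fun setT h ->
  (exists M, forall x, `|h x| <= M) -> mu.-integrable setT (EFin \o h).
Proof.
move=> fin mh [M hM]; apply: measurable_bounded_integrable => //.
exists M; split; first by rewrite num_real.
by move=> M' MM' x _; apply: le_trans (hM x) (ltW MM').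
Qed.

Section Core.
Context d (T : measurableType d) (R : realType) (I : Type) (phi : I -> T -> R).
Hypothesis mphi : forall i, measurable_fun setT (phi i).
Hypothesis phi01 : forall i x, 0 <= phi i x <= 1.
Variables (rho1 rho2 : {measure set T -> \bar R}).
Hypotheses (fin1 : (rho1 setT < +oo)%E) (fin2 : (rho2 setT < +oo)%E).

Fixpoint mono (l : seq I) (x : T) : R :=
  if l is i :: l' then phi i x * mono l' x else 1.

Hypothesis hmom : forall l,
  (\int[rho1]_x (mono l x)%:E = \int[rho2]_x (mono l x)%:E)%E.

Lemma mono_meas l : measurable_fun setT (mono l).
Proof. elim: l => [|i l IH] /=; [exact: measurable_cst|exact: measurable_funM]. Qed.

Lemma mono01 l x : 0 <= mono l x <= 1.
Proof.
elim: l => [|i l IH] /=; first by rewrite ler01 lexx.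
have /andP[a0 a1] := phi01 i x; have /andP[b0 b1] := IH.
by rewrite mulr_ge0 //= mulr_ile1.
Qed.

Lemma mono_cat l1 l2 x : mono (l1 ++ l2) x = mono l1 x * mono l2 x.
Proof. by elim: l1 => [|i l IH] /=; [rewrite mul1r|rewrite IH mulrA]. Qed.

Definition Good (f : T -> R) := [/\ measurable_fun setT f,
  (exists M, forall x, `|f x| <= M) &
  forall l, (\int[rho1]_x (f x * mono l x)%:E = \int[rho2]_x (f x * mono l x)%:E)%E].

Lemma Good_ext f g : f =1 g -> Good f -> Good g.
Proof. by move=> /funext ->. Qed.

Lemma Good_mono l : Good (mono l).
Proof.
split; first exact: mono_meas.
  by exists 1 => x; have /andP[a b] := mono01 l x; rewrite ger0_norm.
move=> l'.
have E (rho : {measure set T -> \bar R}) : (\int[rho]_x (mono l x * mono l' x)%:E = \int[rho]_x (mono (l ++ l') x)%:E)%E.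
  by apply: eq_integral => x _; rewrite mono_cat.
by rewrite !E hmom.
Qed.

Lemma Good_prodint f l : Good f -> forall rho : {measure set T -> \bar R}, (rho setT < +oo)%E ->
  rho.-integrable setT (EFin \o (fun x => f x * mono l x)).
Proof.
move=> [mf [M hM] _] rho fin; apply: int_bd => //.
  by apply: measurable_funM => //; exact: mono_meas.
exists M => x; rewrite normrM; have /andP[a b] := mono01 l x.
rewrite (ger0_norm a); apply: le_trans (hM x).
by rewrite -[X in _ <= X]mulr1 ler_wpM2l.
Qed.

Lemma GoodD f g : Good f -> Good g -> Good (fun x => f x + g x).
Proof.
move=> Gf Gg; have [mf [M hM] If] := Gf; have [mg [N hN] Ig] := Gg.
split; first exact: measurable_funD.
  by exists (M + N) => x; apply: le_trans (ler_normD _ _) _; exact: lerD.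
move=> l.
have E (rho : {measure set T -> \bar R}) : (rho setT < +oo)%E -> (\int[rho]_x ((f x + g x) * mono l x)%:E =
   \int[rho]_x (f x * mono l x)%:E + \int[rho]_x (g x * mono l x)%:E)%E.
  move=> fin.
  transitivity (\int[rho]_x ((f x * mono l x)%:E + (g x * mono l x)%:E))%E.
    by apply: eq_integral => x _; rewrite mulrDl EFinD.
  by apply: integralD => //; exact: Good_prodint.
by rewrite !E // If Ig.
Qed.

Lemma GoodZ c f : Good f -> Good (fun x => c * f x).
Proof.
move=> Gf; have [mf [M hM] If] := Gf.
split; first exact: measurable_funM.
  by exists (`|c| * M) => x; rewrite normrM ler_wpM2l.
move=> l.
have E (rho : {measure set T -> \bar R}) : (rho setT < +oo)%E -> (\int[rho]_x (c * f x * mono l x)%:E =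
   c%:E * \int[rho]_x (f x * mono l x)%:E)%E.
  move=> fin.
  transitivity (\int[rho]_x (c%:E * (f x * mono l x)%:E))%E.
    by apply: eq_integral => x _; rewrite -mulrA EFinM.
  by apply: integralZl => //; exact: Good_prodint.
by rewrite !E // If.
Qed.

Lemma Good_phi i f : Good f -> Good (fun x => phi i x * f x).
Proof.
move=> Gf; have [mf [M hM] If] := Gf.
split; first exact: measurable_funM.
  exists M => x; rewrite normrM; have /andP[a b] := phi01 i x.
  by rewrite (ger0_norm a); apply: le_trans (hM x); rewrite -[X in _ <= X]mul1r ler_wpM2r.
move=> l.
have E (rho : {measure set T -> \bar R}) : (\int[rho]_x (phi i x * f x * mono l x)%:E =
   \int[rho]_x (f x * mono (i :: l) x)%:E)%E.
  by apply: eq_integral => x _ /=; congr EFin; ring.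
by rewrite !E If.
Qed.

Lemma Good0 : Good (fun _ => 0).
Proof. apply: (@Good_ext (fun x => 0 * mono [::] x)); first by move=> x; rewrite mul0r.
exact/GoodZ/Good_mono. Qed.

Lemma Good_sum (J : Type) (s : seq J) (P : pred J) (F : J -> T -> R) :
  (forall j, Good (F j)) -> Good (fun x => \sum_(j <- s | P j) F j x).
Proof.
move=> GF; elim: s => [|j s IH].
  by apply: (Good_ext _ Good0) => x; rewrite big_nil.
case Pj: (P j).
  by apply: (Good_ext _ (GoodD (GF j) IH)) => x; rewrite big_cons Pj.
by apply: (Good_ext _ IH) => x; rewrite big_cons Pj.
Qed.

Lemma Good_bern m k i f : Good f -> Good (fun x => bern m k (phi i x) * f x).
Proof.
elim: m k f => [|m IH] k f Gf.
  by apply: GoodZ.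
have G1 : Good (fun x => (1 - phi i x) * f x).
  apply: (@Good_ext (fun x => f x + (-1) * (phi i x * f x))).
    by move=> x; ring.
  by apply: GoodD => //; apply: GoodZ; apply: Good_phi.
case: k => [|k].
  apply: (Good_ext _ (IH 0%N _ G1)) => x /=; ring.
apply: (Good_ext _ (GoodD (IH k.+1 _ G1) (IH k _ (Good_phi i Gf)))) => x /=; ring.
Qed.


Fixpoint H (l : seq (I * R)) (n : nat) (x : T) : R :=
  if l is ir :: l' then qb n ir.2 (phi ir.1 x) * H l' n x else 1.

Lemma Good_H l n : Good (H l n).
Proof.
elim: l => [|[i r] l IH] /=.
  exact: (Good_ext _ (Good_mono [::])).
apply: (@Good_ext (fun x => \sum_(k < (n.+1 ^ 4).+1 | k%:R <= (n.+1 ^ 4)%:R * r - (n.+1 ^ 3)%:R)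
   (bern (n.+1 ^ 4) k (phi i x) * H l n x))).
  by move=> x; rewrite /qb mulr_suml.
by apply: Good_sum => k; exact: Good_bern.
Qed.

Lemma H01 l n x : 0 <= H l n x <= 1.
Proof.
elim: l => [|[i r] l IH] /=; first by rewrite ler01 lexx.
have /andP[a b] := IH.
have a' := qb_ge0 n r (phi01 i x); have b' := qb_le1 n r (phi01 i x).
by rewrite mulr_ge0 //= mulr_ile1.
Qed.

Fixpoint cyl (l : seq (I * R)) : set T :=
  if l is ir :: l' then [set x | phi ir.1 x < ir.2] `&` cyl l' else setT.

Lemma cyl_meas l : measurable (cyl l).
Proof.
elim: l => [|[i r] l IH] /=; first exact: measurableT.
apply: measurableI => //.
have := mphi i measurableT (measurable_itv `]-oo, r[).
by rewrite setTI preimage_itvNyo.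
Qed.

Lemma H_cvg l x : (fun n => H l n x) @ \oo --> (\1_(cyl l) x : R).
Proof.
elim: l => [|[i r] l IH] /=.
  by rewrite indicT; exact: cvg_cst.
rewrite indicI [X in _ --> X]/=.
have -> : \1_[set x | phi i x < r] x = (if phi i x < r then 1 else 0 : R).
  by rewrite indicE; case: ifPn => h; [rewrite mem_set|rewrite memNset //; apply/negP].
exact: cvgM (qb_cvg (r:=r) (phi01 i x)) IH.
Qed.

Lemma int_H_cvg l (rho : {measure set T -> \bar R}) : (rho setT < +oo)%E ->
  (fun n => \int[rho]_x (H l n x)%:E)%E @ \oo --> rho (cyl l).
Proof.
move=> fin.
have mH n : measurable_fun setT (fun x => (H l n x)%:E).
  by apply/measurable_EFinP; have [] := Good_H l n.
have mI : measurable_fun setT (fun x => (\1_(cyl l) x : R)%:E).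
  exact: (proj2 (measurable_EFinP _ _) (measurable_indic (D:=setT) (cyl_meas l))).
have h1 : {ae rho, forall x, setT x -> (fun n => (H l n x)%:E) @ \oo --> (\1_(cyl l) x : R)%:E}.
  apply: aeW => x _; apply/fine_cvgP; split; first exact: nearW.
  exact: H_cvg.
have h2 : rho.-integrable setT (fun _ => 1%:E).
  apply: (@int_bd _ _ _ rho (fun _ => 1)) => //; by [exact: measurable_cst | exists 1 => x; rewrite normr1].
have h3 : {ae rho, forall x n, setT x -> (`|(H l n x)%:E| <= 1%:E)%E}.
  apply: aeW => x n _; rewrite abse_EFin lee_fin.
  by have /andP[a b] := H01 l n x; rewrite ger0_norm.
have [_ _ c] := dominated_convergence measurableT mH mI h1 h2 h3.
by rewrite integral_indic ?setIT // in c; exact: cyl_meas.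
Qed.

Lemma core_eq l : rho1 (cyl l) = rho2 (cyl l).
Proof.
have c1 := int_H_cvg (l:=l) fin1; have c2 := int_H_cvg (l:=l) fin2.
have E : (fun n => \int[rho1]_x (H l n x)%:E)%E = (fun n => \int[rho2]_x (H l n x)%:E)%E.
  apply: funext => n; have [_ _ G] := Good_H l n.
  have := G [::]; rewrite /=.
  by under eq_integral do rewrite mulr1; under [X in _ = X]eq_integral do rewrite mulr1.
rewrite E in c1.
exact: (cvg_unique _ c1 c2).
Qed.


Lemma cyl_cat l1 l2 : cyl (l1 ++ l2) = cyl l1 `&` cyl l2.
Proof. by elim: l1 => [|ir l IH] /=; [rewrite setTI|rewrite IH setIA]. Qed.

Hypothesis mgen : @measurable _ T = <<s range cyl >>.

Lemma rho_eq A : measurable A -> rho1 A = rho2 A.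
Proof.
apply: (measure_unique (range cyl) (fun _ => setT)) => //.
- by move=> _ _ [l1 _ <-] [l2 _ <-]; exists (l1 ++ l2) => //; rewrite cyl_cat.
- by move=> _; exists [::].
- by rewrite bigcup_const.
- by move=> _ [l _ <-]; exact: core_eq.
Qed.

End Core.

Section Tup.
Context dX (X : measurableType dX) (R : realType).
Local Notation I := {U : set X | measurable U}.

Fixpoint trel (s : seq X) (l : seq (set X)) : Prop :=
  match s, l with
  | x :: s', U :: l' => U x /\ trel s' l'
  | [::], [::] => True
  | _, _ => False
  end.

Definition tupset n (l : seq (set X)) : set (n.-tuple X) := [set t | trel (tval t) l].
Arguments tupset n l _ : clear implicits.

Lemma tupset_meas n (l : seq I) : size l = n -> measurable (tupset n (map sval l)).
Proof.
elim: n l => [|n IH] [|U l] //= hs.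
  rewrite (_ : tupset 0 [::] = setT) //; apply/seteqP; split => // -[[|x s] Hs] //.
case: hs => hs.
rewrite (_ : tupset n.+1 _ = ((fun t : n.+1.-tuple X => tnth t ord0) @^-1` (sval U)) `&`
   ((fun t : n.+1.-tuple X => [tuple of behead t]) @^-1` tupset n (map sval l))).
  apply: measurableI.
    by have := @measurable_tnth _ X n.+1 ord0 measurableT _ (svalP U); rewrite setTI.
  by have := measurable_behead measurableT (IH l hs); rewrite setTI.
by apply/seteqP; split => -[[|x s] Hs].
Qed.

Lemma iprod_set0 (mu : {measure set X -> \bar R}) n : iprod mu n set0 = 0%E.
Proof.
elim: n => [|n IH] /=; first by rewrite indic0.
rewrite (_ : (fun x => iprod mu n _) = cst 0%E) ?integral0 //.
by apply: funext => x; exact: IH.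
Qed.

Fixpoint mprod (mu : set X -> \bar R) (l : seq I) : R :=
  if l is U :: l' then fine (mu (sval U)) * mprod mu l' else 1.

Lemma mprod_ge0 (mu : {measure set X -> \bar R}) l : 0 <= mprod mu l.
Proof.
elim: l => [|U l IH] //=; apply: mulr_ge0 => //.
Qed.

Lemma iprod_tupset (mu : {measure set X -> \bar R})
  (hmu : forall U, measurable U -> (mu U <= 1)%E) n (l : seq I) :
  size l = n -> iprod mu n (tupset n (map sval l)) = (mprod mu l)%:E.
Proof.
elim: n l => [|n IH] [|U l] //= hs.
  by rewrite indicE mem_set.
case: hs => hs.
transitivity (\int[mu]_x ((mprod mu l)%:E * (\1_(sval U) x)%:E))%E.
  apply: eq_integral => x _; case: (pselect (sval U x)) => h.
    rewrite (_ : [set t | _] = tupset n (map sval l)); first by rewrite IH // indicE mem_set // mule1.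
    by apply/seteqP; split => t /=; rewrite /tupset /=; tauto.
  rewrite (_ : [set t | _] = set0); first by rewrite iprod_set0 indicE memNset // mule0.
  by apply/seteqP; split => t //=; rewrite /tupset /=; tauto.
rewrite ge0_integralZl_EFin //.
- rewrite integral_indic ?setIT; last exact: svalP.
  rewrite -[in LHS](@fineK _ (mu (sval U))); first by rewrite -EFinM mulrC.
  by rewrite ge0_fin_numE ?measure_ge0 // (le_lt_trans (hmu _ (svalP U))) // ltry.
- by [].
- by apply/measurable_EFinP; exact: measurable_indic (svalP U).
- exact: mprod_ge0.
Qed.

End Tup.

Lemma ev_lt (R : realType) (x : \bar R) (r : R) : (0 <= x <= 1)%E -> (x < r%:E)%E = (fine x < r).
Proof.
move=> /andP[a b]; rewrite -[in LHS](@fineK _ x) ?lte_fin //.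
by rewrite ge0_fin_numE // (le_lt_trans b) ?ltry.
Qed.

Lemma fin01 (R : realType) (x : \bar R) : (0 <= x <= 1)%E -> ((fine x)%:E = x)%E.
Proof.
move=> /andP[a b]; rewrite fineK //.
by rewrite ge0_fin_numE // (le_lt_trans b) ?ltry.
Qed.

Section PCase.
Context (R : realType) dX (X : measurableType dX).
Local Notation I := {U : set X | measurable U}.

Definition phiP (U : I) (p : pprobability X R) : R := fine (p (sval U)).

Lemma p01 (p : probability X R) U : measurable U -> (0 <= p U <= 1)%E.
Proof. by move=> mU; rewrite measure_ge0 probability_le1. Qed.

Lemma measurable_evP U : measurable U ->
  measurable_fun [set: pprobability X R] (fun p : pprobability X R => p U).
Proof.
move=> mU.
apply: (measurability _ (ErealGenInftyO.measurableE R)) => _ /= -[_ [r ->] <-].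
rewrite setTI preimage_itvNyo -/(mset U r).
have [r0|r0] := leP 0%R r; last by rewrite lt0_mset.
have [r1|r1] := leP r 1%R; last by rewrite gt1_mset.
by apply: sub_sigma_algebra; exists r => /=; [rewrite in_itv/= r0|exists U].
Qed.

Lemma mphiP U : measurable_fun setT (phiP U).
Proof.
apply/measurable_EFinP.
rewrite (_ : EFin \o phiP U = fun p : pprobability X R => p (sval U)).
  exact: measurable_evP (svalP U).
by apply: funext => p /=; rewrite /phiP fin01 // p01 //; exact: (svalP U).
Qed.

Lemma phi01P U p : 0 <= phiP U p <= 1.
Proof.
have h := p01 p (svalP U).
by rewrite -!lee_fin /phiP fin01.
Qed.

Lemma mgenP : @measurable _ (pprobability X R) = <<s range (cyl phiP) >>.
Proof.
apply/seteqP; split.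
- apply: smallest_sub; first exact: smallest_sigma_algebra.
  move=> _ [r r01 [U mU <-]].
  apply: sub_sigma_algebra; exists [:: (exist _ U mU, r)] => //.
  apply/seteqP; split => p /=.
    by move=> [h _]; rewrite /mset /= ev_lt // p01.
  by rewrite /mset /= ev_lt ?p01.
- apply: smallest_sub; first exact: sigma_algebra_measurable.
  by move=> _ [l _ <-]; exact: cyl_meas mphiP l.
Qed.

End PCase.

Section MCase.
Context (R : realType) dX (X : measurableType dX).
Local Notation I := {U : set X | measurable U}.

Definition phiM (U : I) (p : giry X R) : R := fine (p (sval U)).

Lemma m01 (p : subprobability X R) U : measurable U -> (0 <= p U <= 1)%E.
Proof.
move=> mU; rewrite measure_ge0 /=.
apply: le_trans (@sprobability_setT _ _ _ p).
by apply: le_measure => //; rewrite inE.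
Qed.

Lemma mphiM U : measurable_fun setT (phiM U).
Proof.
apply/measurable_EFinP.
rewrite (_ : EFin \o phiM U = fun p : giry X R => giry_ev p (sval U)).
  exact: measurable_giry_ev (svalP U).
by apply: funext => p /=; rewrite /phiM fin01 // m01 //; exact: (svalP U).
Qed.

Lemma phi01M U p : 0 <= phiM U p <= 1.
Proof.
have h := m01 p (svalP U).
by rewrite -!lee_fin /phiM fin01.
Qed.

Lemma mgenM : @measurable _ (giry X R) = <<s range (cyl phiM) >>.
Proof.
apply/seteqP; split.
- apply: smallest_sub; first exact: smallest_sigma_algebra.
  move=> _ [A mA [E mE <-]].
  pose S := image_set_system setT (fun p : giry X R => giry_ev p A) <<s range (cyl phiM) >>.
  have sS : sigma_algebra setT S.
    by apply: sigma_algebra_image; exact: smallest_sigma_algebra.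
  have GS : <<s @ErealGenInftyO.G R >> `<=` S.
    apply: smallest_sub => // _ [r ->].
    rewrite /S /image_set_system /=.
    apply: sub_sigma_algebra; exists [:: (exist _ A mA, r)] => //.
    rewrite setTI preimage_itvNyo.
    apply/seteqP; split => p /=.
      by move=> [h _]; rewrite /giry_ev ev_lt // m01.
    by rewrite /giry_ev ev_lt ?m01.
  have mE' : (@ErealGenInftyO.G R).-sigma.-measurable E.
    by rewrite -(ErealGenInftyO.measurableE R); exact: mE.
  exact: GS mE'.
- apply: smallest_sub; first exact: sigma_algebra_measurable.
  by move=> _ [l _ <-]; exact: cyl_meas mphiM l.
Qed.

End MCase.

Unset Implicit Arguments.
Local Open Scope ereal_scope.
Theorem theorem9p1 (R : realType) :
  (forall (dX : measure_display) (X : measurableType dX)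
          (dA : measure_display) (A : measurableType dA)
          (f g : A -> pprobability (pprobability X R) R),
      measurable_fun [set: A] f -> measurable_fun [set: A] g ->
      (forall (n : nat) (a : A) (B : set (n.-tuple X)), measurable B ->
          samp_after_P f n a B = samp_after_P g n a B) ->
      forall (a : A) (S : set (pprobability X R)), measurable S ->
        f a S = g a S)
  /\
  (forall (dX : measure_display) (X : measurableType dX)
          (dA : measure_display) (A : measurableType dA)
          (f g : A -> giry (giry X R) R),
      measurable_fun [set: A] f -> measurable_fun [set: A] g ->
      (forall (n : nat) (a : A) (B : set (n.-tuple X)), measurable B ->
          samp_after_M f n a B = samp_after_M g n a B) ->
      forall (a : A) (S : set (giry X R)), measurable S ->
        f a S = g a S).
Proof.
split.
- move=> dX X dA A f g mf mg hyp a S mS.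
  have E (rho : {measure set (pprobability X R) -> \bar R}) (l : seq {U : set X | measurable U}) :
    \int[rho]_p iprod (p : probability X R) (size l) (@tupset _ X (size l) (map sval l))
    = \int[rho]_p (mono (@phiP R dX X) l p)%:E.
    apply: eq_integral => p _; rewrite iprod_tupset //.
      by congr EFin; elim: l => //= U l ->.
    by move=> U mU; have /andP[] := p01 p mU.
  apply: (rho_eq (@mphiP R dX X) (@phi01P R dX X) _ _ _ (@mgenP R dX X) mS).
  + by apply: (@le_lt_trans _ _ 1%E); [exact: probability_le1 | exact: ltry].
  + by apply: (@le_lt_trans _ _ 1%E); [exact: probability_le1 | exact: ltry].
  + move=> l; rewrite -!E.
    exact: hyp (size l) a _ (tupset_meas (l:=l) erefl).
- move=> dX X dA A f g mf mg hyp a S mS.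
  have E (rho : {measure set (giry X R) -> \bar R}) (l : seq {U : set X | measurable U}) :
    \int[rho]_p iprod (p : subprobability X R) (size l) (@tupset _ X (size l) (map sval l))
    = \int[rho]_p (mono (@phiM R dX X) l p)%:E.
    apply: eq_integral => p _; rewrite iprod_tupset //.
      by congr EFin; elim: l => //= U l ->.
    by move=> U mU; have /andP[] := m01 p mU.
  apply: (rho_eq (@mphiM R dX X) (@phi01M R dX X) _ _ _ (@mgenM R dX X) mS).
  + by apply: le_lt_trans (@sprobability_setT _ _ _ (f a)) _; rewrite ltry.
  + by apply: le_lt_trans (@sprobability_setT _ _ _ (g a)) _; rewrite ltry.
  + move=> l; rewrite -!E.
    exact: hyp (size l) a _ (tupset_meas (l:=l) erefl).
Qed.
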